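(* Let $((f_t),(g_t),(h_t))$ be a $W_{1,+}$-geodesic on $G$ with associated function $m$. For any vertices $x_0\le x_1\le\cdots\le x_m$, $$m(x_0,\dots,x_m)=\frac{m(x_0,x_1)\cdots m(x_{m-1},x_m)}{m(x_1)\cdots m(x_{m-1})}.$$
   Context: $G$ is a connected, locally finite graph with graph distance $d$; geodesics are paths of adjacent vertices $\gamma(0),\dots,\gamma(n)$ with $n=d(\gamma(0),\gamma(n))$, $e_0(\gamma)=\gamma(0)$, $e_1(\gamma)=\gamma(n)$. For finitely supported probability distributions $f_0,f_1$: $\Pi_1(f_0,f_1)$ = couplings minimizing $\sum d(x,y)\pi(x,y)$ (minimum $W_1$), $\mathcal{C}(f_0,f_1)=\{(x,y):\pi(x,y)>0$ for some $\pi\in\Pi_1\}$; $W_1$-orientation: adjacent $x,y$ get $x\to y$ iff some geodesic $\gamma$ with $(e_0(\gamma),e_1(\gamma))\in\mathcal{C}(f_0,f_1)$ has $\gamma(k)=x,\gamma(k+1)=y$. Oriented paths: $\gamma(i)\to\gamma(i+1)$; $x\le y$ iff an oriented path (possibly of length $0$) goes from $x$ to $y$; $\gamma_i=\gamma(i)$. $E(G)=\{(xy):x\to y\}$, $T(G)$ the triples $x_0\to x_1\to x_2$, $\mathcal{F}(x)=\{y:x\to y\}$, $\mathcal{E}(x)=\{y:y\to x\}$; $\nabla g(x_1)=\sum_{\mathcal{F}(x_1)}g(x_1x_2)-\sum_{\mathcal{E}(x_1)}g(x_0x_1)$, $\nabla h(x_1x_2)=\sum_{x_3\in\mathcal{F}(x_2)}h(x_1x_2x_3)-\sum_{x_0\in\mathcal{E}(x_1)}h(x_0x_1x_2)$.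 $W_{1,+}$-geodesic: a family $(f_t)_{t\in[0,1]}$ from $f_0$ to $f_1$ with $W_1(f_s,f_t)=|t-s|W_1(f_0,f_1)$, differentiable in $t$, with $g_t$ on $E(G)$, $h_t$ on $T(G)$, $\partial_tf_t=-\nabla g_t$, $\partial_tg_t=-\nabla h_t$, $g_t>0$, $f_t(x_1)h_t(x_0x_1x_2)=g_t(x_0x_1)g_t(x_1x_2)$. $C_\gamma(t)=f_t(\gamma_0)$ if $L(\gamma)=0$, $g_t(\gamma_0\gamma_1)$ if $L(\gamma)=1$, $\prod_{i=0}^{n-1}g_t(\gamma_i\gamma_{i+1})/\prod_{j=1}^{n-1}f_t(\gamma_j)$ if $n\ge2$. $\mathcal{A}=\{x:\mathcal{E}(x)=\emptyset\}$, $\mathcal{B}=\{x:\mathcal{F}(x)=\emptyset\}$; an oriented path is extremal if it starts in $\mathcal{A}$ and ends in $\mathcal{B}$. For $z_1\le\cdots\le z_p$, $m(z_1,\dots,z_p)=\sum_\gamma C_\gamma(0)$, summed over extremal oriented paths $\gamma$ with indices $k_1\le\cdots\le k_p$ such that $\gamma(k_i)=z_i$ (for extremal $\gamma$, $C_\gamma(t)$ is independent of $t$). *)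

(* Defs.v *)
From HB Require Import structures.
From mathcomp Require Import all_boot all_order all_algebra.
From mathcomp Require Import boolp classical_sets functions cardinality fsbigop.
From mathcomp Require Import reals topology normedtype derive.

Set Implicit Arguments.
Unset Strict Implicit.
Unset Printing Implicit Defensive.

Import Order.TTheory GRing.Theory Num.Theory numFieldNormedType.Exports.
Local Open Scope classical_set_scope.
Local Open Scope ring_scope.

Section W1Geodesics.
Variable R : realType.
Variable V : choiceType.
Variable adj : rel V.

Definition symmetric_graph := forall x y, adj x y = adj y x.
Definition irreflexive_graph := forall x, ~~ adj x x.
Definition locally_finite := forall x, finite_set [set y | adj x y].

Definition walk_len (x y : V) (n : nat) : Prop :=
  exists s : seq V, [/\ size s = n, path adj x s & last x s = y].
Definition connected_graph := forall x y, exists n, walk_len x y n.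

(* graph distance (least length of a walk; 0 if unreachable, which never
   happens for a connected graph) *)
Definition dist (x y : V) : nat :=
  match pselect (exists n, (fun n => `[< walk_len x y n >]) n) with
  | left H => ex_minn H
  | right _ => 0%N
  end.

(* geodesic gamma(0),...,gamma(n): consecutive vertices adjacent and
   n = d(gamma(0), gamma(n)); e0 = head, e1 = last *)
Definition is_geodesic (gam : seq V) : Prop :=
  match gam with
  | x :: s => path adj x s /\ size s = dist x (last x s)
  | [::] => False
  end.

Definition is_fdist (f : V -> R) : Prop :=
  [/\ forall x, 0 <= f x, finite_set [set x | f x != 0]
    & \sum_(x \in [set: V]) f x = 1].

Definition is_coupling (f0 f1 : V -> R) (pi : V * V -> R) : Prop :=
  [/\ forall p, 0 <= pi p, finite_set [set p | pi p != 0],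
      forall x, \sum_(y \in [set: V]) pi (x, y) = f0 x
    & forall y, \sum_(x \in [set: V]) pi (x, y) = f1 y].

Definition cost (pi : V * V -> R) : R :=
  \sum_(p \in [set: V * V]) (dist p.1 p.2)%:R * pi p.

Definition optimal_coupling (f0 f1 : V -> R) (pi : V * V -> R) : Prop :=
  is_coupling f0 f1 pi /\
  forall pi', is_coupling f0 f1 pi' -> cost pi <= cost pi'.

Definition W1 (f0 f1 : V -> R) : R :=
  inf [set c | exists pi, is_coupling f0 f1 pi /\ c = cost pi].

Definition Cset (f0 f1 : V -> R) : set (V * V) :=
  [set p | exists pi, optimal_coupling f0 f1 pi /\ 0 < pi p].

Section Orientation.
Variables f0 f1 : V -> R.

Definition oriented (x y : V) : Prop :=
  adj x y /\
  exists gam : seq V,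
    [/\ is_geodesic gam, Cset f0 f1 (head x gam, last x gam)
      & exists k : nat, [/\ (k.+1 < size gam)%N, nth x gam k = x
                           & nth x gam k.+1 = y]].

Definition orel : rel V := fun x y => `[< oriented x y >].

Definition opath (gam : seq V) : bool :=
  if gam is x :: s then path orel x s else false.

Definition ole (x y : V) : Prop := exists s : seq V, path orel x s /\ last x s = y.

Definition Fout (x : V) : set V := [set y | oriented x y].
Definition Ein (x : V) : set V := [set y | oriented y x].
Definition Aset : set V := [set x | Ein x = set0].
Definition Bset : set V := [set x | Fout x = set0].

Definition extremal (gam : seq V) : Prop :=
  match gam with
  | x :: s => [/\ path orel x s, Aset x & Bset (last x s)]
  | [::] => False
  end.

Definition nabla_g (g : V -> V -> R) (x1 : V) : R :=
  \sum_(x2 \in Fout x1) g x1 x2 - \sum_(x0 \in Ein x1) g x0 x1.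

Definition nabla_h (h : V -> V -> V -> R) (x1 x2 : V) : R :=
  \sum_(x3 \in Fout x2) h x1 x2 x3 - \sum_(x0 \in Ein x1) h x0 x1 x2.

Definition Cpath (ft : V -> R) (gt : V -> V -> R) (gam : seq V) : R :=
  match gam with
  | [::] => 0
  | [:: x] => ft x
  | [:: x; y] => gt x y
  | x :: s => (\prod_(i < size s) gt (nth x gam i) (nth x gam i.+1)) /
              (\prod_(1 <= j < size s) ft (nth x gam j))
  end.

(* m(z_1,...,z_p) (evaluated with the time-0 slices ft = f_0, gt = g_0) *)
Definition mfun (ft : V -> R) (gt : V -> V -> R) (zs : seq V) : R :=
  \sum_(gam \in [set gam : seq V | extremal gam /\
         exists ks : seq nat, sorted leq ks /\
           [seq onth gam k | k <- ks] = [seq Some z | z <- zs]])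
    Cpath ft gt gam.

End Orientation.

Definition W1plus_geodesic (f : R -> V -> R) (g : R -> V -> V -> R)
    (h : R -> V -> V -> V -> R) : Prop :=
  [/\ forall t : R, 0 <= t <= 1 -> is_fdist (f t),
      forall s t : R, 0 <= s <= 1 -> 0 <= t <= 1 ->
        W1 (f s) (f t) = `|t - s| * W1 (f 0) (f 1) &
   [/\ forall (t : R) x, 0 <= t <= 1 ->
        is_derive t (1 : R) (fun u : R => f u x) (- nabla_g (f 0) (f 1) (g t) x),
      forall (t : R) x y, 0 <= t <= 1 -> oriented (f 0) (f 1) x y ->
        is_derive t (1 : R) (fun u : R => g u x y) (- nabla_h (f 0) (f 1) (h t) x y),
      forall (t : R) x y, 0 <= t <= 1 -> oriented (f 0) (f 1) x y -> 0 < g t x y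
    & forall (t : R) x0 x1 x2, 0 <= t <= 1 ->
        oriented (f 0) (f 1) x0 x1 -> oriented (f 0) (f 1) x1 x2 ->
        f t x1 * h t x0 x1 x2 = g t x0 x1 * g t x1 x2]].

End W1Geodesics.

(* Main.v *)
Require Import Defs.
From HB Require Import structures.
From mathcomp Require Import all_boot all_order all_algebra.
From mathcomp Require Import boolp classical_sets functions cardinality fsbigop.
From mathcomp Require Import reals topology normedtype derive.
From mathcomp Require Import ring lra zify.
Import Order.TTheory GRing.Theory Num.Theory numFieldNormedType.Exports.
Local Open Scope ring_scope.
Set Implicit Arguments.
Unset Strict Implicit.
Unset Printing Implicit Defensive.
Section Match.
Variable V : eqType.

Fixpoint mt (zs s : seq V) : bool :=
  match zs with
  | [::] => true
  | z :: zs' =>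
    (fix mt1 (s : seq V) : bool :=
       match s with
       | [::] => false
       | x :: s' => ((x == z) && mt zs' s) || mt1 s'
       end) s
  end.

Lemma mt_nil s : mt [::] s. Proof. by []. Qed.
Lemma mt_cons_nil z zs : mt (z :: zs) [::] = false. Proof. by []. Qed.
Lemma mt_cons z zs x s :
  mt (z :: zs) (x :: s) = ((x == z) && mt zs (x :: s)) || mt (z :: zs) s.
Proof. by []. Qed.

Lemma mt_mem zs s z : mt zs s -> z \in zs -> z \in s.
Proof.
elim: zs s => [//|z0 zs IH] s; elim: s => [//|x s IHs].
rewrite mt_cons => /orP[/andP[/eqP-> H]|H].
  rewrite inE => /orP[/eqP->|]; first by rewrite inE eqxx.
  exact: IH.
by move=> /(IHs H); rewrite inE orbC => ->.
Qed.

Lemma mt1 v s : mt [:: v] s = (v \in s).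
Proof.
elim: s => [//|x s IH]; rewrite mt_cons IH inE /= andbT eq_sym.
by case: (x == v).
Qed.

Lemma mt_core v zl zr p q : v \notin p -> v \notin q ->
  mt (zl ++ v :: zr) (p ++ v :: q) =
  mt (zl ++ [:: v]) (p ++ [:: v]) && mt (v :: zr) (v :: q).
Proof.
move=> vp vq.
have Hq : forall zs, v \in zs -> mt zs q = false.
  by move=> zs vz; apply/negbTE/negP => /mt_mem /(_ vz); apply/negP.
elim: p vp zl => [|x p IHp] vp zl.
  elim: zl => [|z zl IHz].
    by rewrite !cat0s /= eqxx.
  rewrite !cat0s !cat_cons mt_cons IHz [mt (z :: _) [:: v]]mt_cons Hq; last first.
    by rewrite inE mem_cat inE eqxx !orbT.
  by rewrite orbF mt_cons_nil orbF andbA cat0s.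
have xv : x != v by move: vp; rewrite inE negb_or eq_sym => /andP[].
have vp' : v \notin p by move: vp; rewrite inE negb_or => /andP[].
elim: zl => [|z zl IHz].
  rewrite !cat0s !cat_cons mt_cons (negbTE xv) andFb orFb.
  rewrite [mt [:: v] _]mt_cons (negbTE xv) andFb orFb.
  by have := IHp vp' [::]; rewrite !cat0s.
rewrite !cat_cons mt_cons -cat_cons IHz -cat_cons (IHp vp' (z :: zl)).
rewrite [mt (z :: _) (x :: _)]mt_cons.
by rewrite !cat_cons; case: (x == z); case: (mt (v :: zr) (v :: q)); rewrite ?andbT ?andbF ?orbF.
Qed.

Definition mtp (zs s : seq V) : Prop :=
  exists ks : seq nat, sorted leq ks /\
    [seq onth s k | k <- ks] = [seq Some z | z <- zs].

Lemma sorted_mapS (ks : seq nat) : sorted leq (map S ks) = sorted leq ks.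
Proof. by rewrite sorted_map. Qed.

Lemma mtpP zs s : mtp zs s <-> mt zs s.
Proof.
elim: zs s => [|z zs IH] s.
  by split=> // _; exists [::].
elim: s => [|x s IHs].
  split=> // -[[|k ks] [_ /=]] //; by rewrite onth0n.
rewrite mt_cons; split.
  move=> [[|k ks] [srt e]]; first by [].
  rewrite map_cons in e; case: e => e1 e2.
  case: k srt e1 => [|k] srt e1.
    apply/orP; left; case: e1 => exz; subst x; rewrite eqxx /=.
    apply/IH; exists ks; split => //.
    by move: srt; rewrite /= (path_sortedE leq_trans) => /andP[].
  apply/orP; right; apply/IHs.
  have allk : all (leq k.+1) ks.
    by move: srt; rewrite /= (path_sortedE leq_trans) => /andP[].
  exists (k :: map predn ks); split.
    move: srt; rewrite /= (path_sortedE leq_trans) => /andP[_ srt].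
    rewrite (path_sortedE leq_trans); apply/andP; split.
      by apply/allP => i /mapP[j /(allP allk) kj ->]; case: j kj.
    rewrite sorted_map; apply: (sub_sorted _ srt) => a b ab.
    by case: a ab => [|a]; case: b => [|b].
  rewrite !map_cons; congr (_ :: _); first exact: e1.
  rewrite -e2 -map_comp; apply/eq_in_map => i /(allP allk).
  by case: i.
move=> /orP[/andP[/eqP-> /IH[ks [srt e]]]|/IHs[ks [srt e]]].
  exists (0%N :: ks); split; first by rewrite /= (path_sortedE leq_trans) srt andbT;
    apply/allP.
  by rewrite /= e.
exists (map S ks); split; first by rewrite sorted_mapS.
by rewrite -map_comp; exact: e.
Qed.

End Match.

Section Weights.
Variable R : realType.
Variable V : choiceType.
Variables (fw : V -> R) (gw : V -> V -> R).

Fixpoint Ed (x : V) (s : seq V) : R :=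
  if s is y :: s' then gw x y * Ed y s' else 1.

Fixpoint Id (x : V) (s : seq V) : R :=
  match s with
  | y :: ((_ :: _) as s') => fw y * Id y s'
  | _ => 1
  end.

Lemma Id_cons x a s : s != [::] -> Id x (a :: s) = fw a * Id a s.
Proof. by case: s. Qed.

Lemma Ed_nth x s :
  \prod_(i < size s) gw (nth x (x :: s) i) (nth x (x :: s) i.+1) = Ed x s.
Proof.
elim: s x => [|y s IH] x; first by rewrite big_ord0.
rewrite big_ord_recl /= -(IH y); congr (_ * _).
apply: eq_bigr => i _.
move: (ltn_ord i) => hi /=.
by rewrite (@set_nth_default _ (y :: s) y x) ?(@set_nth_default _ s y x) // ltnW.
Qed.

Lemma Id_nth x s :
  \prod_(1 <= j < size s) fw (nth x (x :: s) j) = Id x s.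
Proof.
elim: s x => [|y s IH] x; first by rewrite big_geq.
case: s IH => [|z s] IH; first by rewrite big_geq.
rewrite big_nat_recl // Id_cons // -(IH y); congr (_ * _).
apply: eq_big_nat => i /andP[_ hi].
by rewrite /= (@set_nth_default _ [:: y, z & s] y x) //= ltnW.
Qed.

Lemma Cpath_E x s : s != [::] -> Cpath fw gw (x :: s) = Ed x s / Id x s.
Proof.
case: s => [//|y [|z s]] _.
  by rewrite /= mulr1 invr1 mulr1.
rewrite -(Ed_nth x) -(Id_nth x).
by [].
Qed.

Lemma Ed_split x s1 v t : Ed x (s1 ++ v :: t) = Ed x (s1 ++ [:: v]) * Ed v t.
Proof.
elim: s1 x => [|a s1 IH] x /=; first by rewrite mulr1.
by rewrite IH mulrA.
Qed.

Lemma Id_split x s1 v y s2 :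
  Id x (s1 ++ v :: y :: s2) = Id x (s1 ++ [:: v]) * fw v * Id v (y :: s2).
Proof.
elim: s1 x => [|a s1 IH] x; first by rewrite !cat0s Id_cons // [Id x [:: v]]/= mul1r.
rewrite Id_cons; last by case: s1 {IH}.
rewrite Id_cons; last by case: s1 {IH}.
by rewrite IH !mulrA.
Qed.

Lemma C_split x s1 v y s2 :
  Cpath fw gw (x :: s1 ++ v :: y :: s2) =
  Ed x (s1 ++ [:: v]) * Ed v (y :: s2) /
    (Id x (s1 ++ [:: v]) * fw v * Id v (y :: s2)).
Proof. by rewrite Cpath_E; [rewrite Ed_split Id_split | case: s1]. Qed.

Lemma C_swap x s1 y s2 x' s1' y' s2' v :
  Cpath fw gw (x :: s1 ++ v :: y :: s2) * Cpath fw gw (x' :: s1' ++ v :: y' :: s2') =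
  Cpath fw gw (x :: s1 ++ v :: y' :: s2') * Cpath fw gw (x' :: s1' ++ v :: y :: s2).
Proof. rewrite !C_split !invfM; ring. Qed.

End Weights.

Lemma sum_invol (R : realType) (T : eqType) (L : seq T) (sg : T -> T) (F : T -> R) :
  uniq L -> (forall x, x \in L -> sg x \in L) ->
  (forall x, x \in L -> sg (sg x) = x) ->
  \sum_(x <- L) F x = \sum_(x <- L) F (sg x).
Proof.
move=> uL sL ssL; rewrite -(big_map sg predT F).
apply: perm_big; apply: uniq_perm => //.
  rewrite map_inj_in_uniq // => a b aL bL e.
  by rewrite -(ssL a aL) e ssL.
move=> x; apply/idP/mapP => [xL|[y yL ->]]; last exact: sL.
by exists (sg x); [exact: sL | rewrite ssL].
Qed.

Local Open Scope classical_set_scope.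

Section Dist.
Variable V : choiceType.
Variable adj : rel V.
Hypothesis conn : connected_graph adj.

Lemma dist_le x y n : walk_len adj x y n -> (dist adj x y <= n)%N.
Proof.
move=> w; rewrite /dist; case: pselect => [H|H].
  by case: ex_minnP => d _ Hmin; apply: Hmin; apply/asboolP.
by exfalso; apply: H; exists n; apply/asboolP.
Qed.

Lemma dist_walk x y : walk_len adj x y (dist adj x y).
Proof.
rewrite /dist; case: pselect => [H|H].
  by case: ex_minnP => d /asboolP.
by exfalso; have [n w] := conn x y; apply: H; exists n; apply/asboolP.
Qed.

Lemma walk_cat x y z n k : walk_len adj x y n -> walk_len adj y z k ->
  walk_len adj x z (n + k).
Proof.
move=> [s [sz ps ls]] [t [szt pt lt]]; exists (s ++ t); split.
- by rewrite size_cat sz szt.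
- by rewrite cat_path ps ls pt.
- by rewrite last_cat ls.
Qed.

Lemma dist_tri x y z : (dist adj x z <= dist adj x y + dist adj y z)%N.
Proof. exact/dist_le/(walk_cat (dist_walk x y) (dist_walk y z)). Qed.

Lemma walk_cons x y z n : adj x y -> walk_len adj y z n -> walk_len adj x z n.+1.
Proof.
move=> a [s [sz ps ls]]; exists (y :: s); split => //=.
- by rewrite sz.
- by rewrite a ps.
Qed.

Lemma walk0 x : walk_len adj x x 0.
Proof. by exists [::]. Qed.

Lemma geo_split (a : V) (s : seq V) k : path adj a s -> (k.+1 < size (a :: s))%N ->
  walk_len adj a (nth a (a :: s) k) k /\
  walk_len adj (nth a (a :: s) k.+1) (last a s) (size s - k.+1).
Proof.
elim: s a k => [|b s IH] a k //= /andP[ab ps] hk.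
case: k hk => [|k] hk.
  split; first exact: walk0.
  by exists s; rewrite subn1.
have [w1 w2] := IH b k ps hk.
have hk' : (k < size s)%N by move: hk; rewrite !ltnS.
split.
  apply: (walk_cons ab).
  by rewrite /= (@set_nth_default _ (b :: s) b a) //= ltnS ltnW.
by rewrite subSS (@set_nth_default _ (b :: s) b a) //=.
Qed.

End Dist.

Section Ball.
Variable V : choiceType.
Variable adj : rel V.
Hypothesis lf : locally_finite adj.

Definition gball (a : V) (n : nat) : set V :=
  [set y | exists2 j, (j <= n)%N & walk_len adj a y j].

Lemma ball_finite a n : finite_set (gball a n).
Proof.
elim: n => [|n IH].
  apply: (sub_finite_set _ (finite_set1 a)) => y [j].
  rewrite leqn0 => /eqP -> [s [sz _ <-]].
  by case: s sz.
apply: (sub_finite_set (B := gball a n `|` \bigcup_(z in gball a n) [set y | adj z y])).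
  move=> y [j]; rewrite leq_eqVlt => /orP[/eqP ->|hj] w; last first.
    by left; exists j.
  right; case: w => s [sz ps ls].
  case/lastP: s sz ps ls => [//|s y'] sz ps ls.
  rewrite rcons_path in ps; case/andP: ps => ps ay.
  rewrite last_rcons in ls; subst y'.
  exists (last a s); last exact: ay.
  exists n => //; exists s; split => //.
  by move: sz; rewrite size_rcons => -[].
rewrite finite_setU; split => //.
by apply: bigcup_finite => // z _; exact: lf.
Qed.

End Ball.

Section Supp.
Variable R : realType.

Lemma fsum_pos_term (T : choiceType) (F : T -> R) (P : set T) t :
  finite_set [set x | F x != 0] -> (forall x, 0 <= F x) -> P t -> 0 < F t ->
  0 < \sum_(x \in P) F x.
Proof.
move=> fin nn Pt Ft; rewrite fsbig_supp.
set S := P `&` _.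
have fS : finite_set S.
  apply: (sub_finite_set _ fin) => x [_ /=]; by move/eqP.
have St : S t by split => //=; apply/eqP; rewrite gt_eqF.
rewrite lt_def fsumr_ge0 ?andbT; last by move=> *; exact: nn.
apply/eqP => /(pfsumr_eq0 fS (fun x _ => nn x)) /(_ t St) Ft0.
by move: Ft; rewrite Ft0 ltxx.
Qed.

Variable V : choiceType.

Lemma row_supp_finite (pi : V * V -> R) a :
  finite_set [set p | pi p != 0] -> finite_set [set y | pi (a, y) != 0].
Proof.
move=> fin; apply: (sub_finite_set _ (finite_image snd fin)) => y /= h.
by exists (a, y).
Qed.

Lemma col_supp_finite (pi : V * V -> R) b :
  finite_set [set p | pi p != 0] -> finite_set [set x | pi (x, b) != 0].
Proof.
move=> fin; apply: (sub_finite_set _ (finite_image fst fin)) => y /= h.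
by exists (y, b).
Qed.

Lemma Cset_supp (F0 F1 : V -> R) (adj : rel V) a b :
  Cset adj F0 F1 (a, b) -> 0 < F0 a /\ 0 < F1 b.
Proof.
move=> [pi [[[nn fin row col] _] pos]]; split.
  by rewrite -(row a); apply: (fsum_pos_term (t := b)) => //; exact: row_supp_finite.
by rewrite -(col b); apply: (fsum_pos_term (t := a)) => //; exact: col_supp_finite.
Qed.

End Supp.

Section OrData.
Variable R : realType.
Variable V : choiceType.
Variable adj : rel V.
Hypothesis conn : connected_graph adj.
Variables F0 F1 : V -> R.

Lemma oriented_data x y : oriented adj F0 F1 x y ->
  exists a b, [/\ Cset adj F0 F1 (a, b),
    ((dist adj a x + dist adj y b).+1 <= dist adj a b)%N,
    gball adj a (dist adj a b) x & gball adj a (dist adj a b) y].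
Proof.
move=> [axy [[|a s] [geo Cab [k [hk ex ey]]]]] //.
case: geo => ps hs.
rewrite /= in Cab.
exists a, (last a s).
have [w1 w2] := geo_split ps hk.
have hk0 : (k < size (a :: s))%N := ltnW hk.
rewrite (@set_nth_default _ (a :: s) a x) // in ex.
rewrite (@set_nth_default _ (a :: s) a x) // in ey.
rewrite ex ey in w1 w2.
have d1 := dist_le w1; have d2 := dist_le w2.
have hk' : (k < size s)%N by [].
split => //.
- rewrite -hs; apply: leq_ltn_trans (leq_add d1 d2) _.
  lia.
- by exists k; [rewrite -hs ltnW | ].
- exists k.+1; first by rewrite -hs.
  have := walk_cat w1 (walk_cons axy (walk0 adj y)).
  by rewrite addn1.
Qed.

End OrData.

Local Open Scope classical_set_scope.

Section OT.
Variable R : realType.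

Lemma fsumT_seq (T : choiceType) (L : seq T) (F : T -> R) : uniq L ->
  (forall x, x \notin L -> F x = 0) ->
  \sum_(x \in [set: T]) F x = \sum_(x <- L) F x.
Proof.
move=> uL sL; rewrite [RHS]fsbig_seq //; symmetry; apply: fsbig_widen => // x [_ /= xL].
by rewrite /= sL //; apply/negP.
Qed.

Lemma sum_ind_seq (T : eqType) (L : seq T) (v : T) (G : T -> R) :
  uniq L -> v \in L -> \sum_(y <- L) (y == v)%:R * G y = G v.
Proof.
move=> uL vL; rewrite (bigD1_seq v) //= eqxx mul1r big1 ?addr0 //.
by move=> y /negbTE ->; rewrite mul0r.
Qed.

Lemma minpos (n : nat) (G : nat -> R) : (forall l, (l < n)%N -> 0 < G l) ->
  exists2 mu, 0 < mu & forall l, (l < n)%N -> mu <= G l.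
Proof.
elim: n => [|n IH] H; first by exists 1.
have [mu mu0 Hmu] := IH (fun l hl => H l (ltnW hl)).
exists (Num.min mu (G n)); first by rewrite lt_min mu0 H.
move=> l; rewrite ltnS leq_eqVlt => /orP[/eqP->|hl].
  by rewrite ge_min lexx orbT.
by rewrite ge_min Hmu.
Qed.

Variable V : choiceType.
Variable adj : rel V.
Variables F0 F1 : V -> R.

Local Notation dd p := ((dist adj p.1 p.2)%:R : R).

Lemma ot_contra (k : nat) (a b A : nat -> V) (P : nat -> V * V -> R) :
  (0 < k)%N ->
  (forall l, (l < k)%N -> optimal_coupling adj F0 F1 (P l)) ->
  (forall l, (l < k)%N -> 0 < P l (a l, b l)) ->
  (forall l, (l < k)%N -> A l = a l) -> A k = A 0 ->
  (\sum_(l < k) dist adj (A l.+1) (b l) < \sum_(l < k) dist adj (a l) (b l))%N ->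
  False.
Proof.
move=> k0 opt pos eA eAk hcost.
have cpl l : (l < k)%N -> is_coupling F0 F1 (P l) by move=> hl; case: (opt l hl).
have fin l : (l < k)%N -> finite_set [set p | P l p != 0].
  by move=> hl; case: (cpl l hl).
pose Ls := undup (flatten [seq (finmap.enum_fset (fset_set [set p | P l p != 0])) ++
                            [:: (A l.+1, b l); (a l, b l)] | l <- iota 0 k]).
have uLs : uniq Ls := undup_uniq _.
have inLs l p : (l < k)%N ->
    p \in (finmap.enum_fset (fset_set [set p | P l p != 0])) ++ [:: (A l.+1, b l); (a l, b l)] ->
    p \in Ls.
  move=> hl hp; rewrite mem_undup; apply/flattenP.
  exists ((finmap.enum_fset (fset_set [set p | P l p != 0])) ++ [:: (A l.+1, b l); (a l, b l)]) => //.
  by apply/mapP; exists l; rewrite ?mem_iota.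
have supP l p : (l < k)%N -> p \notin Ls -> P l p = 0.
  move=> hl pL; apply/eqP/negPn/negP => hp; move/negP: pL; apply.
  apply: (inLs l) => //; rewrite mem_cat; apply/orP; left.
  by rewrite in_fset_set ?inE //; exact: fin.
have inA l : (l < k)%N -> (A l.+1, b l) \in Ls.
  by move=> hl; apply: (inLs l) => //; rewrite mem_cat !inE eqxx orbT.
have ina l : (l < k)%N -> (a l, b l) \in Ls.
  by move=> hl; apply: (inLs l) => //; rewrite mem_cat !inE eqxx !orbT.
pose Lx := undup (map fst Ls); pose Ly := undup (map snd Ls).
have uLx : uniq Lx := undup_uniq _.
have uLy : uniq Ly := undup_uniq _.
have inLx p : p \in Ls -> p.1 \in Lx by move=> h; rewrite mem_undup map_f.
have inLy p : p \in Ls -> p.2 \in Ly by move=> h; rewrite mem_undup map_f.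
have costE (F : V * V -> R) : (forall p, p \notin Ls -> F p = 0) ->
    cost adj F = \sum_(p <- Ls) dd p * F p.
  move=> hF; rewrite /cost (fsumT_seq uLs) // => p pL.
  by rewrite hF ?mulr0.
have rowE (F : V * V -> R) x : (forall p, p \notin Ls -> F p = 0) ->
    \sum_(y \in [set: V]) F (x, y) = \sum_(y <- Ly) F (x, y).
  move=> hF; rewrite (fsumT_seq uLy) // => y yL; apply: hF.
  by apply/negP => /inLy /=; apply/negP.
have colE (F : V * V -> R) y : (forall p, p \notin Ls -> F p = 0) ->
    \sum_(x \in [set: V]) F (x, y) = \sum_(x <- Lx) F (x, y).
  move=> hF; rewrite (fsumT_seq uLx) // => x xL; apply: hF.
  by apply/negP => /inLx /=; apply/negP.
have [mu mu0 Hmu] := minpos pos.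
have kR : (k%:R : R) != 0 by rewrite pnatr_eq0 -lt0n.
have kR0 : 0 < (k%:R : R) by rewrite ltr0n.
pose pa (p : V * V) : R := k%:R^-1 * \sum_(l < k) P l p.
pose del (p : V * V) : R :=
  \sum_(l < k) (((p == (A l.+1, b l)))%:R - ((p == (a l, b l)))%:R).
pose eps : R := mu / (k%:R * k%:R).
have eps0 : 0 < eps by rewrite divr_gt0 // mulr_gt0.
pose pp (p : V * V) : R := pa p + eps * del p.
have pa0 p : p \notin Ls -> pa p = 0.
  by move=> pL; rewrite /pa big1 ?mulr0 // => l _; exact: supP.
have del0 p : p \notin Ls -> del p = 0.
  move=> pL; rewrite /del big1 // => l _.
  have -> : (p == (A l.+1, b l)) = false.
    by apply/negbTE; apply: contraNneq pL => ->; exact: inA.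
  have -> : (p == (a l, b l)) = false.
    by apply/negbTE; apply: contraNneq pL => ->; exact: ina.
  by rewrite subrr.
have pp0 p : p \notin Ls -> pp p = 0.
  by move=> pL; rewrite /pp pa0 // del0 // mulr0 addr0.
have Pnn l p : (l < k)%N -> 0 <= P l p by move=> hl; case: (cpl l hl).
have rowP l x : (l < k)%N -> \sum_(y <- Ly) P l (x, y) = F0 x.
  by move=> hl; rewrite -rowE; [case: (cpl l hl) | move=> p; exact: supP].
have colP l y : (l < k)%N -> \sum_(x <- Lx) P l (x, y) = F1 y.
  by move=> hl; rewrite -colE; [case: (cpl l hl) | move=> p; exact: supP].
have avg (c : R) : k%:R^-1 * \sum_(l < k) c = c.
  by rewrite sumr_const card_ord -(mulr_natr c) mulrCA mulVf // mulr1.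
have rowpa x : \sum_(y <- Ly) pa (x, y) = F0 x.
  rewrite /pa -mulr_sumr exchange_big /= -[RHS](avg (F0 x)); congr (_ * _).
  by apply: eq_bigr => l _; rewrite rowP.
have colpa y : \sum_(x <- Lx) pa (x, y) = F1 y.
  rewrite /pa -mulr_sumr exchange_big /= -[RHS](avg (F1 y)); congr (_ * _).
  by apply: eq_bigr => l _; rewrite colP.
have rowind (x u v : V) : v \in Ly -> \sum_(y <- Ly) ((x, y) == (u, v))%:R = ((x == u)%:R : R).
  move=> vL; under eq_bigr do rewrite xpair_eqE -mulnb natrM mulrC.
  by rewrite (sum_ind_seq (fun _ => ((x == u)%:R : R))).
have colind (y u v : V) : u \in Lx -> \sum_(x <- Lx) ((x, y) == (u, v))%:R = ((y == v)%:R : R).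
  move=> uL; under eq_bigr do rewrite xpair_eqE -mulnb natrM.
  by rewrite (sum_ind_seq (fun _ => ((y == v)%:R : R))).
have rowdel x : \sum_(y <- Ly) del (x, y) = 0.
  rewrite /del exchange_big /=.
  transitivity (\sum_(l < k) (((x == A l.+1)%:R : R) - (x == A l)%:R)).
    apply: eq_bigr => l _; rewrite sumrB rowind ?rowind ?(eA l) //.
    - by have := inLy _ (ina l (ltn_ord l)).
    - by have := inLy _ (inA l (ltn_ord l)).
  rewrite -(big_mkord xpredT (fun l => ((x == A l.+1)%:R : R) - (x == A l)%:R)).
  by rewrite telescope_sumr // eAk subrr.
have coldel y : \sum_(x <- Lx) del (x, y) = 0.
  rewrite /del exchange_big /= big1 // => l _.
  rewrite sumrB colind ?colind ?subrr //.
  - by have := inLx _ (ina l (ltn_ord l)).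
  - by have := inLx _ (inA l (ltn_ord l)).
have pa_ge0 p : 0 <= pa p.
  by rewrite /pa mulr_ge0 ?invr_ge0 ?ler0n // sumr_ge0 // => l _; exact: Pnn.
have pp_ge0 p : 0 <= pp p.
  have [[l hl ->]|nol] := pselect (exists2 l, (l < k)%N & p = (a l, b l)).
    have h1 : k%:R^-1 * mu <= pa (a l, b l).
      rewrite /pa ler_wpM2l ?invr_ge0 ?ler0n //.
      apply: le_trans (Hmu l hl) _.
      rewrite (bigD1 (Ordinal hl)) //= lerDl sumr_ge0 // => i _; exact: Pnn.
    have h2 : - k%:R <= del (a l, b l).
      have hs : \sum_(i < k) (-1 : R) <= del (a l, b l).
      { apply: ler_sum => i _.
        case: (_ == (A i.+1, b i)); case: (_ == (a i, b i));
          rewrite /= ?subrr ?subr0 ?sub0r ?lerN2 ?ler01 //.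
        all: rewrite ?mulr1n ?oppr_le0 ?ler01 ?ler0n //; lra. }
      apply: le_trans hs.
      by rewrite -(big_mkord xpredT (fun _ => -1)) sumr_const_nat subn0 mulNrn.
    have e : eps * k%:R = k%:R^-1 * mu by rewrite /eps; field.
    have h3 : - (k%:R^-1 * mu) <= eps * del (a l, b l).
      by rewrite -e -mulrN ler_wpM2l // ltW.
    rewrite /pp; lra.
  have h2 : 0 <= del p.
    rewrite /del sumr_ge0 // => i _.
    have -> : (p == (a i, b i)) = false.
      by apply/negbTE/eqP => e; apply: nol; exists i.
    by rewrite subr0 ler0n.
  by rewrite /pp addr_ge0 // mulr_ge0 // ltW.
have cpp : is_coupling F0 F1 pp.
  split => //.
  - apply: (sub_finite_set _ (finite_seq Ls)) => p /= hp.
    by apply/negPn/negP => /pp0; apply/eqP.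
  - by move=> x; rewrite rowE // /pp big_split rowpa -mulr_sumr rowdel /= mulr0 addr0.
  - by move=> y; rewrite colE // /pp big_split colpa -mulr_sumr coldel /= mulr0 addr0.
have costpa : cost adj pa <= cost adj pp.
  have -> : cost adj pa = k%:R^-1 * \sum_(l < k) cost adj (P l).
    rewrite costE // /pa.
    under eq_bigr do rewrite mulrCA.
    rewrite -mulr_sumr; congr (_ * _).
    under eq_bigr do rewrite mulr_sumr.
    rewrite exchange_big; apply: eq_bigr => l _; rewrite costE //.
    by move=> p; exact: supP.
  rewrite -[X in _ <= X](avg (cost adj pp)) ler_wpM2l ?invr_ge0 ?ler0n //.
  by apply: ler_sum => l _; exact: (opt l (ltn_ord l)).2 pp cpp.
have costpp : cost adj pp < cost adj pa.
  have hdel : \sum_(p <- Ls) dd p * del p < 0.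
    have -> : \sum_(p <- Ls) dd p * del p =
        \sum_(l < k) (dd (A l.+1, b l) - dd (a l, b l)).
      rewrite /del; under eq_bigr do rewrite mulr_sumr.
      rewrite exchange_big; apply: eq_bigr => l _.
      under eq_bigr do rewrite mulrBr.
      rewrite sumrB; congr (_ - _).
        under eq_bigr do rewrite mulrC.
        by rewrite sum_ind_seq //; exact: inA.
      under eq_bigr do rewrite mulrC.
      by rewrite sum_ind_seq //; exact: ina.
    by rewrite sumrB /= -!natr_sum subr_lt0 ltr_nat.
  rewrite !costE //.
  have -> : \sum_(p <- Ls) dd p * pp p =
      \sum_(p <- Ls) dd p * pa p + eps * \sum_(p <- Ls) dd p * del p.
    by rewrite mulr_sumr -big_split; apply: eq_bigr => p _; rewrite /pp mulrDr /=; congr (_ + _); rewrite mulrCA.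
  by rewrite gtrDl pmulr_rlt0.
by move: (lt_le_trans costpp costpa); rewrite ltxx.
Qed.

End OT.

Local Open Scope classical_set_scope.

Lemma sum_shift (G : nat -> nat) k : G k = G 0 ->
  (\sum_(l < k) G l.+1 = \sum_(l < k) G l)%N.
Proof.
case: k => [|n] e; first by rewrite !big_ord0.
by rewrite big_ord_recr big_ord_recl /= e addnC.
Qed.

Section Graph.
Variable R : realType.
Variable V : choiceType.
Variable adj : rel V.
Hypothesis conn : connected_graph adj.
Variables F0 F1 : V -> R.

Lemma no_cycle (k : nat) (c : nat -> V) : (0 < k)%N -> c k = c 0 ->
  (forall l, (l < k)%N -> oriented adj F0 F1 (c l) (c l.+1)) -> False.
Proof.
move=> k0 ck Hc.
have H : forall l, exists t : (V * V) * (V * V -> R), (l < k)%N ->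
   [/\ optimal_coupling adj F0 F1 t.2, 0 < t.2 t.1 &
       ((dist adj t.1.1 (c l) + dist adj (c l.+1) t.1.2).+1 <= dist adj t.1.1 t.1.2)%N].
  move=> l; case: (ltnP l k) => hl; last by exists ((c 0, c 0), fun _ => 0).
  have [a [b [[pi [opt pos]] hd _ _]]] := oriented_data (Hc l hl).
  by exists ((a, b), pi).
have [t Ht] := choice H.
pose a l := (t l).1.1; pose b l := (t l).1.2; pose P l := (t l).2.
pose A l := a (l %% k)%N.
have eA l : (l < k)%N -> A l = a l by move=> hl; rewrite /A modn_small.
have eAk : A k = A 0 by rewrite /A modnn mod0n.
apply: (@ot_contra R V adj F0 F1 k a b A P k0) => //.
- by move=> l hl; case: (Ht l hl) => h1 h2 h3.
- move=> l hl; case: (Ht l hl) => _ h2 _; move: h2; rewrite /P /a /b.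
  by case: (t l) => [[u w] q].
have e1 : (\sum_(l < k) dist adj (A l.+1) (b l) <=
    \sum_(l < k) (dist adj (A l.+1) (c l.+1) + dist adj (c l.+1) (b l)))%N.
  by apply: leq_sum => l _; exact: dist_tri.
rewrite big_split /= (@sum_shift (fun l => dist adj (A l) (c l))) /= in e1; last first.
  by rewrite eAk ck.
have e2 : (\sum_(l < k) (dist adj (A l) (c l) + dist adj (c l.+1) (b l) + 1) <=
    \sum_(l < k) dist adj (a l) (b l))%N.
  apply: leq_sum => l _; rewrite addn1 eA //.
  by case: (Ht l (ltn_ord l)) => _ _ h.
rewrite !big_split /= in e2.
have k1 : (\sum_(l < k) 1 = k)%N by rewrite sum_nat_const card_ord muln1.
rewrite k1 in e2.
apply: (leq_ltn_trans e1); apply: (leq_trans _ e2).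
by rewrite -addn1 leq_add2l.
Qed.

Lemma opath_uniq x s : path (orel adj F0 F1) x s -> uniq (x :: s).
Proof.
move=> ps; case: (boolP (uniq (x :: s))) => // /(uniqPn x) [i [j [ij js e]]].
exfalso.
pose k := (j - i)%N.
pose c l := nth x (x :: s) (i + l %% k)%N.
have k0 : (0 < k)%N by rewrite subn_gt0.
have cl l : (l < k)%N -> c l = nth x (x :: s) (i + l) by move=> hl; rewrite /c modn_small.
have cS l : (l < k)%N -> c l.+1 = nth x (x :: s) (i + l.+1).
  move=> hl; case: (ltnP l.+1 k) => hl'; first exact: cl.
  have -> : l.+1 = k by apply/eqP; rewrite eqn_leq hl.
  by rewrite /c modnn addn0 e /k subnKC // ltnW.
apply: (@no_cycle k c k0).
  by rewrite /c modnn mod0n.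
move=> l hl; rewrite cl // cS //.
have hil : (i + l < size s)%N.
  by move: js; rewrite /= ltnS => js; apply: leq_trans js; rewrite -(subnKC (ltnW ij)) ltn_add2l.
have := (pathP x ps) (i + l) hil.
by rewrite addnS => /asboolP.
Qed.

End Graph.

Section Seqs.
Variable T : eqType.
Fixpoint seqs (L : seq T) (n : nat) : seq (seq T) :=
  if n is n'.+1 then [::] :: [seq x :: t | x <- L, t <- seqs L n'] else [:: [::]].

Lemma seqs_in L n s : (size s <= n)%N -> {subset s <= L} -> s \in seqs L n.
Proof.
elim: n s => [|n IH] [|x s] //= hs hsub.
rewrite inE; apply/orP; right; apply/allpairsP; exists (x, s) => /=; split => //.
  by apply: hsub; rewrite inE eqxx.
apply: IH => // y ys; apply: hsub; by rewrite inE ys orbT.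
Qed.
End Seqs.

Section Fin.
Variable R : realType.
Variable V : choiceType.
Variable adj : rel V.
Hypothesis conn : connected_graph adj.
Hypothesis lf : locally_finite adj.
Variables F0 F1 : V -> R.
Hypothesis fd0 : is_fdist F0.
Hypothesis fd1 : is_fdist F1.

Definition Omega : set V :=
  \bigcup_(p in [set p : V * V | F0 p.1 != 0 /\ F1 p.2 != 0]) gball adj p.1 (dist adj p.1 p.2).

Lemma Omega_fin : finite_set Omega.
Proof.
apply: bigcup_finite; last by move=> p _; exact: ball_finite.
apply: (sub_finite_set (B := [set x | F0 x != 0] `*` [set y | F1 y != 0])).
  by move=> [x y] [/= h1 h2].
by apply: finite_setX; [case: fd0 | case: fd1].
Qed.

Lemma oriented_Omega x y : oriented adj F0 F1 x y -> Omega x /\ Omega y.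
Proof.
move=> o; have [a [b [Cab _ bx by']]] := oriented_data o.
have [h0 h1] := Cset_supp Cab.
split; (exists (a, b); [split; rewrite /= gt_eqF // | by []]).
Qed.

Lemma path_Omega x s : path (orel adj F0 F1) x s -> s != [::] ->
  forall y, y \in x :: s -> Omega y.
Proof.
elim: s x => [//|z s IH] x /= /andP[/asboolP xz ps] _ y.
have [Ox Oz] := oriented_Omega xz.
rewrite inE => /orP[/eqP -> //|].
case: s IH ps => [|w s] IH ps.
  by rewrite inE => /eqP ->.
by move=> yin; apply: (IH z ps).
Qed.

Lemma ext_fin v : finite_set [set g | extremal adj F0 F1 g /\ v \in g].
Proof.
pose LO := finmap.enum_fset (fset_set Omega).
apply: (sub_finite_set (B := [set` ([:: v] :: seqs LO (size LO))])) => //.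
case=> [|x s] [] // [ps _ _] vin /=.
rewrite inE; case: s ps vin => [|z s] ps vin.
  by move: vin; rewrite inE => /eqP ->; rewrite eqxx.
apply/orP; right; apply: seqs_in.
  apply: uniq_leq_size; first exact: (opath_uniq conn ps).
  move=> y /(path_Omega ps) /= Oy; rewrite (in_fset_set Omega_fin).
  by rewrite inE; apply: Oy.
move=> y /(path_Omega ps) /= Oy; rewrite (in_fset_set Omega_fin).
by rewrite inE; apply: Oy.
Qed.

End Fin.

Local Open Scope classical_set_scope.

Section Lists.
Variable T : eqType.

Lemma split_first (v : T) s : v \in s -> exists2 p, v \notin p & exists q, s = p ++ v :: q.
Proof.
elim: s => [//|x s IH]; rewrite inE => /orP[/eqP ->|vs].
  by exists [::] => //; exists s.
have [xv|xv] := eqVneq x v.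
  by subst x; exists [::] => //; exists s.
have [p vp [q ->]] := IH vs.
exists (x :: p); first by rewrite inE negb_or eq_sym xv.
by exists q.
Qed.

Lemma idx_cat (v : T) p q : v \notin p -> index v (p ++ v :: q) = size p.
Proof. by move=> vp; rewrite index_cat (negbTE vp) /= eqxx addn0. Qed.

Lemma sorted_cat_mid (e : rel T) p (v : T) q :
  sorted e (p ++ v :: q) = sorted e (rcons p v) && path e v q.
Proof.
case: p => [|x p] /=; first by [].
by rewrite cat_path rcons_path /= andbA.
Qed.

End Lists.

Section Ext.
Variable R : realType.
Variable V : choiceType.
Variable adj : rel V.
Variables F0 F1 : V -> R.

Local Notation ext := (extremal adj F0 F1).
Local Notation orl := (orel adj F0 F1).

Lemma extremal_cat p v q : ext (p ++ v :: q) <->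
  [/\ sorted orl (rcons p v), path orl v q,
      Aset adj F0 F1 (head v p) & Bset adj F0 F1 (last v q)].
Proof.
case: p => [|x p] /=; first by split => -[].
rewrite cat_path rcons_path /= last_cat /=.
split=> [[h hA hB]|[h1 h2 hA hB]].
  by case/andP: h => h1 /andP[h2 h3]; split => //; rewrite h1 h2.
by split => //; case/andP: h1 => -> ->; rewrite h2.
Qed.

Lemma Aset_noin v y : Aset adj F0 F1 v -> ~ oriented adj F0 F1 y v.
Proof. by move=> hA o; have : Ein adj F0 F1 v y by []; rewrite hA. Qed.

Lemma Bset_noout v y : Bset adj F0 F1 v -> ~ oriented adj F0 F1 v y.
Proof. by move=> hB o; have : Fout adj F0 F1 v y by []; rewrite hB. Qed.

End Ext.

Section Main.
Variable R : realType.
Variable V : choiceType.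
Variable adj : rel V.
Variables F0 F1 fw : V -> R.
Variable gw : V -> V -> R.
Local Notation ext := (extremal adj F0 F1).
Local Notation orl := (orel adj F0 F1).
Hypothesis Huniq : forall g, ext g -> uniq g.
Hypothesis Hfin : forall v, finite_set [set g | ext g /\ v \in g].
Hypothesis Hnn : forall g, ext g -> 0 <= Cpath fw gw g.

Local Notation mf := (mfun adj F0 F1 fw gw).
Local Notation C := (Cpath fw gw).

Definition LU v : seq (seq V) := finmap.enum_fset (fset_set [set g | ext g /\ v \in g]).

Lemma LU_uniq v : uniq (LU v).
Proof. exact: finmap.fset_uniq. Qed.

Lemma in_LU v g : g \in LU v <-> ext g /\ v \in g.
Proof. by rewrite /LU (in_fset_set (Hfin v)) inE. Qed.

Lemma mfun_E v zs : v \in zs -> mf zs = \sum_(g <- LU v) (mt zs g)%:R * C g.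
Proof.
move=> vz; rewrite /mfun.
transitivity (\sum_(g \in [set g | ext g /\ mtp zs g]) (mt zs g)%:R * C g).
  apply: eq_fsbigr => g; rewrite inE => -[_ /mtpP ->]; by rewrite mul1r.
rewrite (fsbig_widen _ [set g | ext g /\ v \in g]).
- by rewrite fsbig_finite.
- by move=> g [eg /mtpP hm]; split => //; exact: mt_mem hm vz.
- move=> g [[eg vg] /= hn]; rewrite /=.
  case hm: (mt zs g); last by rewrite mul0r.
  by exfalso; apply: hn; split => //; apply/mtpP.
Qed.

Lemma decomp v g : g \in LU v ->
  exists p q, [/\ g = p ++ v :: q, v \notin p, v \notin q & ext (p ++ v :: q)].
Proof.
move=> /in_LU [eg vg].
have [p vp [q eq]] := split_first vg.
exists p, q; split => //; last by rewrite -eq.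
have := Huniq eg; rewrite eq cat_uniq => /and3P[_ _] /=.
by case/andP.
Qed.

Definition sg v (pr : seq V * seq V) :=
  (take (index v pr.1) pr.1 ++ drop (index v pr.2) pr.2,
   take (index v pr.2) pr.2 ++ drop (index v pr.1) pr.1).

Lemma sg_eq v p q p' q' : v \notin p -> v \notin p' ->
  sg v (p ++ v :: q, p' ++ v :: q') = (p ++ v :: q', p' ++ v :: q).
Proof.
by move=> vp vp'; rewrite /sg /= !idx_cat // !take_size_cat // !drop_size_cat.
Qed.

Lemma ext_swap p v q p' q' : ext (p ++ v :: q) -> ext (p' ++ v :: q') ->
  ext (p ++ v :: q').
Proof.
move=> /extremal_cat [h1 h2 h3 h4] /extremal_cat [h1' h2' h3' h4'].
exact/extremal_cat.
Qed.

Lemma C_swap_ext p v q p' q' : ext (p ++ v :: q) -> ext (p' ++ v :: q') ->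
  C (p ++ v :: q') * C (p' ++ v :: q) = C (p ++ v :: q) * C (p' ++ v :: q').
Proof.
move=> /extremal_cat [h1 h2 h3 h4] /extremal_cat [h1' h2' h3' h4'].
have noin (r : seq V) : sorted orl (rcons r v) -> r != [::] -> ~ Aset adj F0 F1 v.
  case: r => [//|x r] /=; rewrite rcons_path => /andP[_ /asboolP o] _ hA.
  exact: (Aset_noin hA o).
have noout (r : seq V) : path orl v r -> r != [::] -> ~ Bset adj F0 F1 v.
  case: r => [//|y r] /= /andP[/asboolP o _] _ hB.
  exact: (Bset_noout hB o).
case: p h1 h3 => [|x p1] h1 h3.
  case: p' h1' h3' => [|x' p1'] h1' h3'; first by rewrite mulrC.
  by exfalso; apply: (noin _ h1').
case: p' h1' h3' => [|x' p1'] h1' h3'.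
  by exfalso; apply: (noin _ h1).
case: q h2 h4 => [|y q1] h2 h4.
  case: q' h2' h4' => [|y' q1'] h2' h4' //.
  by exfalso; apply: (noout _ h2').
case: q' h2' h4' => [|y' q1'] h2' h4'.
  by exfalso; apply: (noout _ h2).
rewrite !cat_cons; exact/esym/C_swap.
Qed.

Lemma msplit v zl zr :
  mf (zl ++ v :: zr) * mf [:: v] = mf (zl ++ [:: v]) * mf (v :: zr).
Proof.
rewrite !(mfun_E (v := v)); try by rewrite ?mem_cat ?inE ?eqxx ?orbT.
set L := LU v.
pose L2 := [seq (g, d) | g <- L, d <- L].
have pairE (H : seq V -> seq V -> R) :
    \sum_(g <- L) \sum_(d <- L) H g d = \sum_(pr <- L2) H pr.1 pr.2.
  by rewrite big_allpairs.
rewrite !mulr_suml; under eq_bigr do rewrite mulr_sumr.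
under [in RHS]eq_bigr do rewrite mulr_sumr.
rewrite !pairE.
have inL2 pr : pr \in L2 -> pr.1 \in L /\ pr.2 \in L.
  by move=> /allpairsP [[g d] [/= gL dL ->]].
pose F pr := (mt (zl ++ v :: zr) pr.1)%:R * (C pr.1 * C pr.2).
pose G pr := (mt (zl ++ [:: v]) pr.1 && mt (v :: zr) pr.2)%:R * (C pr.1 * C pr.2).
transitivity (\sum_(pr <- L2) F pr).
  apply: eq_big_seq => pr /inL2 [_ dL].
  have := dL; move/in_LU => [_ vd].
  rewrite /F mt1 vd mul1r; ring.
transitivity (\sum_(pr <- L2) G pr); last first.
  apply: eq_big_seq => pr _; rewrite /G -mulnb natrM; ring.
rewrite (@sum_invol R _ L2 (sg v)).
- apply: eq_big_seq => -[g d] /inL2 /= [gL dL].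
  have [p [q [eg vp vq xg]]] := decomp gL.
  have [p' [q' [ed vp' vq' xd]]] := decomp dL.
  subst g d; rewrite sg_eq // /F /G; cbn [fst snd].
  rewrite (C_swap_ext xg xd); congr (_%:R * _).
  rewrite mt_core //.
  have -> : mt (zl ++ [:: v]) (p ++ v :: q) = mt (zl ++ [:: v]) (p ++ [:: v]).
    by have := mt_core zl [::] vp vq; rewrite mt1 inE eqxx andbT.
  have -> : mt (v :: zr) (p' ++ v :: q') = mt (v :: zr) (v :: q').
    by have := mt_core [::] zr vp' vq'; rewrite !cat0s mt1 mem_cat inE eqxx orbT.
  by [].
- by rewrite allpairs_uniq ?LU_uniq // => -[a b] [c d] _ _ [-> ->].
- move=> [g d] /inL2 /= [gL dL].
  have [p [q [eg vp vq xg]]] := decomp gL.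
  have [p' [q' [ed vp' vq' xd]]] := decomp dL.
  subst g d; rewrite sg_eq //.
  apply: allpairs_f; apply/in_LU; split.
  + exact: ext_swap xg xd.
  + by rewrite mem_cat inE eqxx orbT.
  + exact: ext_swap xd xg.
  + by rewrite mem_cat inE eqxx orbT.
- move=> [g d] /inL2 /= [gL dL].
  have [p [q [eg vp vq xg]]] := decomp gL.
  have [p' [q' [ed vp' vq' xd]]] := decomp dL.
  by subst g d; rewrite !sg_eq.
Qed.

Lemma mf_ge0 zs : 0 <= mf zs.
Proof. by rewrite /mfun; apply: fsumr_ge0 => g [eg _]; exact: Hnn. Qed.

Lemma mf_mono v zs : v \in zs -> mf zs <= mf [:: v].
Proof.
move=> vz; rewrite (mfun_E (zs := zs) vz) (mfun_E (zs := [:: v]) (v := v)); last first.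
  by rewrite inE.
rewrite !big_seq; apply: ler_sum => g gL; move/in_LU: gL => [eg vg]; rewrite mt1 vg mul1r.
by case: (mt zs g); rewrite ?mul1r ?mul0r //; exact: Hnn.
Qed.

Lemma prod_formula (x : nat -> V) m : (1 <= m)%N ->
  mf [seq x i | i <- iota 0 m.+1] =
    (\prod_(i < m) mf [:: x i; x i.+1]) / (\prod_(1 <= i < m) mf [:: x i]).
Proof.
elim: m => [//|m IH] _.
case: m IH => [|m] IH.
  by rewrite big_ord1 big_geq // divr1.
have IH' := IH isT.
set zl := [seq x i | i <- iota 0 m.+1].
have e1 : [seq x i | i <- iota 0 m.+3] = zl ++ x m.+1 :: [:: x m.+2].
  rewrite (_ : m.+3 = m.+1 + 2)%N; last by rewrite addn2.
  by rewrite iotaD map_cat add0n.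
have e2 : [seq x i | i <- iota 0 m.+2] = zl ++ [:: x m.+1].
  rewrite (_ : m.+2 = m.+1 + 1)%N; last by rewrite addn1.
  by rewrite iotaD map_cat add0n.
rewrite e2 in IH'.
have P1 : \prod_(i < m.+2) mf [:: x i; x i.+1] =
    (\prod_(i < m.+1) mf [:: x i; x i.+1]) * mf [:: x m.+1; x m.+2].
  by rewrite big_ord_recr.
have P2 : \prod_(1 <= i < m.+2) mf [:: x i] =
    (\prod_(1 <= i < m.+1) mf [:: x i]) * mf [:: x m.+1].
  by rewrite big_nat_recr.
rewrite e1 P1 P2.
have hs := msplit (x m.+1) zl [:: x m.+2].
have [h0|hn] := eqVneq (mf [:: x m.+1]) 0.
  rewrite h0 mulr0 invr0 mulr0.
  apply/eqP; rewrite eq_le mf_ge0 andbT -h0.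
  by apply: mf_mono; rewrite mem_cat mem_head orbT.
have -> : mf (zl ++ x m.+1 :: [:: x m.+2]) =
    mf (zl ++ [:: x m.+1]) * mf [:: x m.+1; x m.+2] / mf [:: x m.+1].
  by rewrite -hs mulfK.
rewrite IH' invfM; ring.
Qed.

End Main.

Local Open Scope classical_set_scope.

Section Pos.
Variable R : realType.
Variable V : choiceType.
Variables (fw : V -> R) (gw : V -> V -> R).

Lemma Id_ge0 x s : (forall y, 0 <= fw y) -> 0 <= Id fw x s.
Proof.
move=> hf; elim: s x => [|y s IH] x; first by rewrite /= ler01.
case: s IH => [|z s] IH; first by rewrite /= ler01.
by rewrite Id_cons // mulr_ge0.
Qed.

Lemma Ed_ge0 (e : rel V) x s : (forall a b, e a b -> 0 < gw a b) -> path e x s ->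
  0 <= Ed gw x s.
Proof.
move=> h; elim: s x => [|y s IH] x //= /andP[exy ps].
by rewrite mulr_ge0 ?IH // ltW // h.
Qed.
End Pos.

Theorem proposition3p6 (R : realType) (V : choiceType) (adj : rel V)
    (f : R -> V -> R) (g : R -> V -> V -> R) (h : R -> V -> V -> V -> R)
    (m : nat) (x : nat -> V) :
  symmetric_graph adj -> irreflexive_graph adj ->
  locally_finite adj -> connected_graph adj ->
  W1plus_geodesic adj f g h ->
  (1 <= m)%N ->
  (forall i, (i < m)%N -> ole adj (f 0) (f 1) (x i) (x i.+1)) ->
  mfun adj (f 0) (f 1) (f 0) (g 0) [seq x i | i <- iota 0 m.+1] =
    (\prod_(i < m) mfun adj (f 0) (f 1) (f 0) (g 0) [:: x i; x i.+1]) /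
    (\prod_(1 <= i < m) mfun adj (f 0) (f 1) (f 0) (g 0) [:: x i]).
Proof.
move=> _ _ lf conn [Hfd _ [_ _ Hg _]] m1 _.
have fd0 : is_fdist (f 0) by apply: Hfd; rewrite lexx ler01.
have fd1 : is_fdist (f 1) by apply: Hfd; rewrite ler01 lexx.
have f0nn : forall y, 0 <= f 0 y by case: fd0.
have gpos : forall a b, orel adj (f 0) (f 1) a b -> 0 < g 0 a b.
  by move=> a b /asboolP o; apply: Hg => //; rewrite lexx ler01.
apply: prod_formula => //.
- by move=> [//|y s] [ps _ _]; exact: (opath_uniq conn ps).
- by move=> v; exact: (ext_fin conn lf fd0 fd1).
- move=> [//|y s] [ps _ _].
  case: s ps => [|z s] ps; first exact: f0nn.
  rewrite Cpath_E //.
  by rewrite divr_ge0 ?Id_ge0 // (Ed_ge0 gpos ps).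
Qed.
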